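(* Let $A=\{i_1,\dots,i_a\}\subseteq\{1,\dots,d\}$ be an ordered subset, let $\alpha\in\mathbb{Z}_2^a$ be even (i.e. $\alpha_1+\dots+\alpha_a$ is even), and let $r\geq 0$. Then the X-cycle $$A^{(r,\alpha)} := h_r^\alpha(A)\,\sigma_A\,c_\alpha(A)$$ lies in $\mathcal{C}_X=\operatorname{Cent}_{\operatorname{gr}\mathcal{S}^f_d}(x_1,\dots,x_d)$, i.e. it commutes with every polynomial generator $x_1,\dots,x_d$ of $\operatorname{gr}\mathcal{S}^f_d$.
   Context: Fix $l,d\geq 1$ and a commutative ring $R$. $\operatorname{gr}\mathcal{S}^f_d$ is the associated graded superalgebra of the cyclotomic Sergeev superalgebra $\mathcal{S}^f_d$ (the quotient of the affine Sergeev superalgebra by the two-sided ideal generated by $f(\hat x_1)$, $f$ monic of degree $l$ with terms all of the same parity), filtered by putting polynomial generators in degree $1$ and Coxeter and Clifford generators in degree $0$. By the PBW theorem, $\operatorname{gr}\mathcal{S}^f_d\cong (R[x_1,\dots,x_d]/(x_1^l,\dots,x_d^l)\,\hat\otimes\, R\Sigma_d)\otimes C_d$, where $C_d$ is the Clifford superalgebra on odd generators $c_1,\dots,c_d$ with $c_i^2=1$, $c_ic_j=-c_jc_i$ ($i\neq j$); in it $x_ic_i=-c_ix_i$, $x_ic_j=c_jx_i$ ($i\ne j$), and permutations act on the indices of $x$'s and $c$'s by conjugation. For $A=\{i_1,\dots,i_a\}$, $\sigma_A$ is the cycle $(i_1\ \dots\ i_a)\in\Sigma_d$, and $c_\alpha(A)=c_{i_1}^{\alpha_1}\cdots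 c_{i_a}^{\alpha_a}$. For $\alpha\in\mathbb{Z}_2^a$ define signs $\epsilon^\alpha_i=\prod_{j<i}(-1)^{\alpha_j}$ ($\epsilon^\alpha_1=1$), and for even $\alpha$ and $r\ge 0$ define $$h_r^\alpha(A)=\sum_{r_1+\dots+r_a=(a-1)(l-1)+r}(\epsilon^\alpha_1x_{i_1})^{r_1}\cdots(\epsilon^\alpha_a x_{i_a})^{r_a}.$$ The proof uses the identity $x_{i_j}h^\alpha_r(A)=(-1)^{\alpha_j}h^\alpha_r(A)x_{\sigma_A(i_j)}$ for $j=1,\dots,a$. *)

(* Defs.v *)
From HB Require Import structures.
From mathcomp Require Import all_boot all_order all_algebra all_fingroup.
Set Implicit Arguments. Unset Strict Implicit. Unset Printing Implicit Defensive.
Import GRing.Theory.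
Local Open Scope ring_scope.

(* The cycle sigma_A = (i_1 i_2 ... i_a) : i_j |-> i_(j+1), i_a |-> i_1,
   every other index fixed.  [next] (path.v) is the cyclic successor in a
   sequence; we apply it to [undup s], which equals [s] when [s] is uniq. *)
Lemma cycle_fun_inj d (s : seq 'I_d) : injective (next (undup s)).
Proof. exact: can_inj (prev_next (undup_uniq s)). Qed.

Definition cycle_perm d (s : seq 'I_d) : {perm 'I_d} := perm (@cycle_fun_inj d s).

Section XCycle.
Variables (A : pzRingType) (d l : nat).
Variables (x c : 'I_d -> A) (sig : {perm 'I_d} -> A).

Definition eps a (alpha : a.-tuple bool) (j : 'I_a) : A :=
  (-1) ^+ count id (take j alpha).

Definition hra a (t : a.-tuple 'I_d) (alpha : a.-tuple bool) (r : nat) : A :=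
  let N := ((a - 1) * (l - 1) + r)%N in
  \sum_(rr : {ffun 'I_a -> 'I_N.+1} | (\sum_(j < a) (rr j : nat))%N == N)
     \prod_(j < a) (eps alpha j * x (tnth t j)) ^+ rr j.

Definition calpha a (t : a.-tuple 'I_d) (alpha : a.-tuple bool) : A :=
  \prod_(j < a) (if tnth alpha j then c (tnth t j) else 1).

Definition Xcycle a (t : a.-tuple 'I_d) (alpha : a.-tuple bool) (r : nat) : A :=
  hra t alpha r * sig (cycle_perm t) * calpha t alpha.
End XCycle.

(* Main.v *)
Require Import Defs.
From mathcomp Require Import all_boot all_order all_algebra all_fingroup zify.
Set Implicit Arguments. Unset Strict Implicit. Unset Printing Implicit Defensive.
Import GRing.Theory.
Local Open Scope ring_scope.

Section Gen.
Variable G : pzRingType.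

Lemma prod_zero (I : eqType) (s : seq I) (F : I -> G) i0 :
  i0 \in s -> F i0 = 0 -> \prod_(i <- s) F i = 0.
Proof.
elim: s => [//|i s IH]; rewrite inE big_cons => /orP[/eqP<- ->|/IH H /H ->].
  by rewrite mul0r.
by rewrite mulr0.
Qed.

Lemma prod_insert (I : eqType) (s : seq I) (F : I -> G) z j :
  uniq s -> j \in s -> (forall i, GRing.comm z (F i)) ->
  z * \prod_(i <- s) F i = \prod_(i <- s) (if i == j then z * F i else F i).
Proof.
move=> + + Hc; elim: s => [//|i s IH] /= /andP[his us].
rewrite inE !big_cons; case: eqVneq => [-> _|ne /= js].
  rewrite mulrA; congr (_ * _); apply: eq_big_seq => k ks.
  by case: eqVneq => // ek; rewrite -ek ks in his.
by rewrite mulrA Hc -mulrA IH.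
Qed.
End Gen.

Section Key.
Variables (G : pzRingType) (l a r : nat) (y : 'I_a -> G).
Hypothesis ycomm : forall i j, y i * y j = y j * y i.
Hypothesis ynil : forall i, y i ^+ l = 0.
Hypothesis hl : (0 < l)%N.

Let N := ((a - 1) * (l - 1) + r)%N.
Definition HH : G := \sum_(rr : {ffun 'I_a -> 'I_N.+1} | (\sum_(j < a) (rr j : nat))%N == N)
     \prod_(j < a) y j ^+ rr j.

Definition Q (j : 'I_a) (rr : {ffun 'I_a -> 'I_N.+1}) :=
  [forall m, (m != j) ==> (0 < rr m)%N].
Definition PP (j : 'I_a) (rr : {ffun 'I_a -> 'I_N.+1}) := ((\sum_(m < a) (rr m : nat))%N == N) && Q j rr.
Definition FF (j : 'I_a) (rr : {ffun 'I_a -> 'I_N.+1}) :=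
  \prod_(m < a) y m ^+ (rr m + (m == j)).

Lemma sum_ind (j : 'I_a) : (\sum_(m < a) (m == j : nat))%N = 1%N.
Proof.
rewrite (bigD1 j) //= eqxx big1 // => m /negPf -> //.
Qed.

Lemma yX_zero i n : (l <= n)%N -> y i ^+ n = 0.
Proof. by move=> ln; rewrite -(subnK ln) exprD ynil mulr0. Qed.

Lemma step1 j : y j * HH = \sum_(rr | PP j rr) FF j rr.
Proof.
rewrite /HH mulr_sumr (bigID (Q j)) /= [X in _ + X]big1 ?addr0.
  apply: eq_bigr => rr _; rewrite ((prod_insert (j:=j) (index_enum_uniq _))) ?mem_index_enum //.
    apply: eq_bigr => m _; case: eqVneq => [->|_]; last by rewrite addn0.
    by rewrite addn1 exprS.
  by move=> i; apply: commrX.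
move=> rr /andP[/eqP Hs /forallPn[m]]; rewrite negb_imply -leqNgt leqn0 => /andP[mj /eqP rm0].
rewrite ((prod_insert (j:=j) (index_enum_uniq _))) ?mem_index_enum; last by move=> i; apply: commrX.
have [m' Hm'] : exists m', (l <= rr m' + (m' == j))%N.
  case: (boolP [exists m', (l <= rr m' + (m' == j))%N]) => [/existsP//|].
  rewrite negb_exists => /forallP Hall; exfalso.
  have Hle : forall i, (rr i + (i == j) <= l - 1)%N.
    by move=> i; have := Hall i; lia.
  have E1 : (\sum_(i < a) (rr i + (i == j)) = N + 1)%N.
    by rewrite big_split /= Hs sum_ind.
  have E2 : (\sum_(i < a) (rr i + (i == j)) = (rr m + (m == j)) + \sum_(i < a | i != m) (rr i + (i == j)))%N.
    by rewrite (bigD1 m).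
  have E3 : (\sum_(i < a | i != m) (rr i + (i == j)) <= \sum_(i < a | i != m) (l - 1))%N.
    by apply: leq_sum => i _; apply: Hle.
  have E4 : (\sum_(i < a) (l - 1) = (l - 1) + \sum_(i < a | i != m) (l - 1))%N.
    by rewrite (bigD1 m).
  have E5 : (\sum_(i < a) (l - 1) = a * (l - 1))%N.
    by rewrite sum_nat_const card_ord.
  move: E1 E2 E3 E4 E5; rewrite rm0 (negPf mj) /N; nia.
apply: (prod_zero (i0 := m')); first exact: mem_index_enum.
case: eqVneq Hm' => [->|_] Hm'.
  by rewrite -exprS -addn1 yX_zero.
by rewrite yX_zero //; move: Hm'; rewrite /= addn0.
by [].
Qed.

Definition shift (j j' : 'I_a) (rr : {ffun 'I_a -> 'I_N.+1}) : {ffun 'I_a -> 'I_N.+1} :=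
  [ffun m => inord (rr m + (m == j) - (m == j'))].

Lemma sum2 (F : 'I_a -> nat) j j' : j != j' ->
  (F j + F j' <= \sum_(m < a) F m)%N.
Proof.
move=> ne; rewrite (bigD1 j) //= (bigD1 j') 1?eq_sym //=.
by rewrite addnA leq_addr.
Qed.

Lemma shiftP j j' rr : j != j' -> PP j rr ->
  [/\ PP j' (shift j j' rr), shift j' j (shift j j' rr) = rr &
   forall m, (shift j j' rr m : nat) + (m == j') = rr m + (m == j)]%N.
Proof.
move=> ne /andP[/eqP Hs /forallP Hq].
have rj' : (0 < rr j')%N by have := Hq j'; rewrite eq_sym ne.
have bj : (rr j + rr j' <= N)%N 
  by have := sum2 (fun m => rr m : nat) ne; rewrite Hs.
have Hv : forall m, ((shift j j' rr m : nat) + (m == j') = rr m + (m == j))%N.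
  move=> m; rewrite ffunE inordK.
    case: (eqVneq m j) => [->|mj]; first by rewrite (negPf ne) /=; lia.
    case: (eqVneq m j') => [->|mj'] /=; first by rewrite /= in rj' *; lia.
    lia.
  case: (eqVneq m j) => [->|mj]; first by rewrite (negPf ne) /=; lia.
  case: (eqVneq m j') => [->|mj'] /=; have := ltn_ord (rr m); lia.
split => //.
- apply/andP; split.
    have E : (\sum_(m < a) (shift j j' rr m : nat) + \sum_(m < a) (m == j' : nat)
             = \sum_(m < a) (rr m : nat) + \sum_(m < a) (m == j : nat))%N.
      by rewrite -!big_split; apply: eq_bigr => m _; exact: Hv.
    by move: E; rewrite !sum_ind Hs => /eqP; rewrite eqn_add2r.
  apply/forallP => m; apply/implyP => mj'; have := Hv m; rewrite (negPf mj') addn0 => ->.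
  case: (eqVneq m j) => [_|mj]; first by rewrite addn1.
  by rewrite addn0; have := Hq m; rewrite mj.
- apply/ffunP => m; apply/val_inj; rewrite ffunE /= Hv.
  case: (eqVneq m j) => [->|mj]; first by rewrite addn1 subn1 /= inord_val.
  by rewrite addn0 subn0 inord_val.
Qed.

Lemma step2 j j' : j != j' -> \sum_(rr | PP j rr) FF j rr = \sum_(rr | PP j' rr) FF j' rr.
Proof.
move=> ne.
rewrite (reindex_onto (shift j' j) (shift j j')); last first.
  by move=> i Pi; have [] := shiftP ne Pi.
apply: eq_big => k.
  apply/idP/idP.
    case/andP => Pk /eqP <-; by have [] := shiftP ne Pk.
  move=> Pk; have ne' : j' != j by rewrite eq_sym.
  by have [-> -> _] := shiftP ne' Pk; rewrite eqxx.
case/andP => Pk0 /eqP Ek; have ne' : j' != j by rewrite eq_sym.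
have Pk : PP j' k by rewrite -Ek; have [] := shiftP ne Pk0.
have [_ _ Hv] := shiftP ne' Pk.
by apply: eq_bigr => m _; rewrite Hv.
Qed.

Lemma keyHH j j' : y j * HH = y j' * HH.
Proof.
case: (eqVneq j j') => [->//|ne]; by rewrite !step1 (step2 ne).
Qed.
End Key.

Lemma next_seq (T : eqType) (x0 : T) (s : seq T) i : uniq s -> (i < size s)%N ->
  next s (nth x0 s i) = nth x0 s (if (i.+1 < size s)%N then i.+1 else 0%N).
Proof.
move=> us lt; have Hi := index_uniq x0 lt us; rewrite next_nth mem_nth //.
case: s us lt Hi => [//|z p] us lt Hi; rewrite Hi.
case: ltnP => H.
  by apply: set_nth_default.
by rewrite nth_default //; lia.
Qed.

Lemma sign2 (G : pzRingType) n : ((-1) ^+ n * (-1) ^+ n = 1 :> G).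
Proof. by rewrite -exprD addnn -mul2n exprM sqrrN expr1n expr1n. Qed.

Theorem mainTheorem8 (R : comNzRingType) (G : algType R) (l d : nat)
  (x c : 'I_d -> G) (sig : {perm 'I_d} -> G)
  (hl : (0 < l)%N) (hd : (0 < d)%N)
  (x_comm : forall i j, x i * x j = x j * x i)
  (x_nil : forall i, x i ^+ l = 0)
  (c_sq : forall i, c i * c i = 1)
  (c_anti : forall i j, i != j -> c i * c j = - (c j * c i))
  (xc_same : forall i, x i * c i = - (c i * x i))
  (xc_diff : forall i j, i != j -> x i * c j = c j * x i)
  (sig1 : sig 1%g = 1)
  (sigM : forall w1 w2 : {perm 'I_d}, sig (w1 * w2)%g = sig w2 * sig w1)
  (sig_x : forall (w : {perm 'I_d}) i, sig w * x i = x (w i) * sig w)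
  (sig_c : forall (w : {perm 'I_d}) i, sig w * c i = c (w i) * sig w)
  (a : nat) (t : a.-tuple 'I_d) (alpha : a.-tuple bool) (r : nat)
  (ha : (0 < a)%N) (ht : uniq t) (halpha : ~~ odd (count id alpha)) :
  forall k : 'I_d,
    x k * Xcycle l x c sig t alpha r = Xcycle l x c sig t alpha r * x k.
Proof.
move=> k.
pose y := fun j : 'I_a => eps G alpha j * x (tnth t j).
have yc : forall i j, y i * y j = y j * y i.
  move=> i j; apply: commr_sym; apply: commrM; first exact: commr_sign.
  apply: commr_sym; apply: commrM; first exact: commr_sign.
  exact: x_comm.
have yn : forall i, y i ^+ l = 0.
  move=> i; rewrite /y exprMn_comm ?x_nil ?mulr0 //.
  exact/commr_sym/commr_sign.
set h := hra l x t alpha r.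
have Hh : h = HH l r y by [].
have Hxh : forall i, x i * h = h * x i.
  move=> i; rewrite Hh; apply: commr_sum => rr _; apply: commr_prod => m _.
  apply: commrX; apply: commrM; first exact: commr_sign.
  exact: x_comm.
rewrite /Xcycle -/h.
set ca := calpha c t alpha.
set w := cycle_perm t.
pose f := fun i : 'I_a => if tnth alpha i then c (tnth t i) else 1.
pose b := fun i : 'I_a => (tnth alpha i && (tnth t i == k)).
have Hca : forall s : seq 'I_a, x k * \prod_(i <- s) f i =
    (-1 : G) ^+ (\sum_(i <- s) b i)%N * \prod_(i <- s) f i * x k.
  elim => [|i s IH]; first by rewrite !big_nil expr0 !mul1r mulr1.
  rewrite !big_cons exprD.
  have Hf : x k * f i = (-1 : G) ^+ b i * f i * x k.
    rewrite /f /b; case: (tnth alpha i) => /=; last by rewrite expr0 !mul1r mulr1.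
    case: (eqVneq (tnth t i) k) => [->|ne] /=.
      by rewrite expr1 mulN1r mulNr xc_same.
    by rewrite expr0 mul1r xc_diff // eq_sym.
  rewrite mulrA Hf -!mulrA IH !mulrA; congr (_ * _ * _).
  by rewrite -!mulrA (commr_sign (f i)).
set n := (\sum_(i < a) b i)%N.
have Hca' : ca * x k = (-1 : G) ^+ n * x k * ca.
  have := Hca (index_enum 'I_a); rewrite -/ca => E.
  by rewrite -mulrA E !mulrA sign2 mul1r.
suff Hk : x k * h = (-1 : G) ^+ n * h * x (w k).
  rewrite !mulrA Hk -[RHS]mulrA Hca' !mulrA; congr (_ * ca).
  rewrite -(mulrA h (sig w)) (commr_sign (sig w) n) mulrA (commr_sign h n).
  by rewrite -!mulrA sig_x.
have Hw : w k = next t k by rewrite /w /cycle_perm permE undup_id.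
rewrite Hw.
case: (boolP (k \in t)) => kt; last first.
  rewrite next_nth (negPf kt).
  have -> : n = 0%N.
    rewrite /n big1 // => i _; rewrite /b.
    case: eqVneq => [E|]; last by rewrite andbF.
    by rewrite -E mem_tnth in kt.
  by rewrite expr0 mul1r Hxh.
case/tnthP: kt => j Ek.
have Hn : n = tnth alpha j.
  rewrite /n (bigD1 j) //= {1}/b Ek eqxx andbT big1 ?addn0 // => i ne.
  rewrite /b Ek (tnth_nth k) (tnth_nth k t j) nth_uniq ?size_tuple //.
  by have ne2 : (i : nat) != j by []; rewrite (negPf ne2) andbF.
have [j' Hj' Hs] : exists2 j' : 'I_a, next t (tnth t j) = tnth t j' &
     eps G alpha j * eps G alpha j' = (-1 : G) ^+ tnth alpha j.
  clear Hn.
  have Hnx := next_seq k ht (i := j); rewrite size_tuple in Hnx.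
  case: (ltnP j.+1 a) => H.
    exists (Ordinal H); first by rewrite (tnth_nth k) Hnx ?H // (tnth_nth k).
    rewrite /eps -exprD -signr_odd -[in RHS]signr_odd.
    rewrite /= (take_nth false) ?size_tuple // -cats1 count_cat /=.
    by rewrite (tnth_nth false) !oddD addbA addbb /=; case: (nth _ _ _).
  exists (Ordinal ha).
    by rewrite (tnth_nth k) Hnx ?ltn_ord // ifN -?leqNgt // (tnth_nth k).
  rewrite /eps -exprD -signr_odd -[in RHS]signr_odd.
  rewrite /= take0 /= addn0.
  have Ea : j.+1 = a by have := ltn_ord j; lia.
  have Ecnt : count id (tval alpha) = (count id (take j alpha) + count id [:: nth false alpha j])%N.
    rewrite -count_cat cats1 -take_nth ?size_tuple // take_oversize //.
    by rewrite size_tuple Ea.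
  move: halpha; rewrite Ecnt (tnth_nth false) oddD /=.
  by case: (odd _); case: (nth _ _ _).
rewrite Ek Hj' Hn -Hs.
have K := @keyHH G l a r y yc yn hl j j'; rewrite -Hh /y in K.
rewrite -[x (tnth t j) * h]mul1r -(sign2 G (count id (take j alpha))).
rewrite -[in RHS]mulrA -Hxh -!mulrA.
rewrite /eps in K Hs *.
by congr (_ * _); rewrite !mulrA.
Qed.
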